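(* Let $G=(\mathcal{X},\mathcal{E})$ be a (simple, undirected) graph on a finite vertex set and $P$ a pmf on $\mathcal{X}$. Then $I_2(G,P)\le H_2(G,P)$.
   Context: $\log$ is base 2. $I_2(G,P):=-\log\sum_{(x,x')\in\mathcal{X}^2:\,\{x,x'\}\notin\mathcal{E}}P(x)P(x')$ (pairs with $x=x'$ are included, since singletons are never edges). Let $\mathcal{Y}\subseteq2^{\mathcal{X}}$ be the set of maximal independent sets of $G$, and let $\Delta(G,P)$ be the set of pmfs $P(x,y)$ on $\mathcal{X}\times\mathcal{Y}$ whose $\mathcal{X}$-marginal is $P$ and with $\sum_{(x,y):x\in y}P(x,y)=1$; write $P(y)$ for the $\mathcal{Y}$-marginal. Define $H_2(G,P):=\min_{P(x,y)\in\Delta(G,P)}\Big(-\log\sum_{(x,y):x\in y}P(x)P(y)\Big)$. *)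

(* Defs.v *)
From mathcomp Require Import all_boot.
From Stdlib Require Import Reals.
Set Implicit Arguments. Unset Strict Implicit. Unset Printing Implicit Defensive.

Local Open Scope R_scope.

Definition log2 (x : R) : R := ln x / ln 2.

Section Defs.
Variable X : finType.
(* simple undirected graph: e symmetric and irreflexive (hypotheses in the theorem) *)
Variable e : rel X.

Definition is_pmf (P : X -> R) : Prop :=
  (forall x, 0 <= P x) /\ \big[Rplus/0]_(x : X) P x = 1.

Definition independent (S : {set X}) : bool :=
  [forall x in S, forall x' in S, ~~ e x x'].
Definition max_indep (S : {set X}) : bool := maxset independent S.

Definition I2 (P : X -> R) : R :=
  - log2 (\big[Rplus/0]_(x : X) \big[Rplus/0]_(x' : X | ~~ e x x') (P x * P x')).

(* joint pmf Q(x,y) on X x Y, Y = maximal independent sets; represented as a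
   function on X * {set X} vanishing outside X x Y *)
Definition in_Delta (P : X -> R) (Q : X -> {set X} -> R) : Prop :=
  (forall x y, 0 <= Q x y) /\
  (forall x y, ~~ max_indep y -> Q x y = 0) /\
  (forall x, \big[Rplus/0]_(y : {set X} | max_indep y) Q x y = P x) /\
  \big[Rplus/0]_(x : X) \big[Rplus/0]_(y : {set X} | max_indep y && (x \in y)) Q x y = 1.

Definition margY (Q : X -> {set X} -> R) (y : {set X}) : R :=
  \big[Rplus/0]_(x : X) Q x y.

(* objective minimised in the definition of H_2(G,P) *)
Definition H2_obj (P : X -> R) (Q : X -> {set X} -> R) : R :=
  - log2 (\big[Rplus/0]_(x : X) \big[Rplus/0]_(y : {set X} | max_indep y && (x \in y))
            (P x * margY Q y)).

End Defs.

(* Main.v *)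
Require Import Defs.
From HB Require Import structures.
From mathcomp Require Import all_boot.
From Stdlib Require Import Reals Lra.

Set Implicit Arguments. Unset Strict Implicit.
Local Open Scope R_scope.

HB.instance Definition _ := Monoid.isComLaw.Build R 0 Rplus
  (fun a b c => esym (Rplus_assoc a b c)) Rplus_comm Rplus_0_l.

Section Aux.
Variable I : finType.

Lemma sum_le (Pr : pred I) (F G : I -> R) :
  (forall i, Pr i -> F i <= G i) ->
  \big[Rplus/0]_(i | Pr i) F i <= \big[Rplus/0]_(i | Pr i) G i.
Proof.
move=> H; elim/big_ind2: _ => //; first exact: Rle_refl.
by move=> *; apply: Rplus_le_compat.
Qed.

Lemma sum_ge0 (Pr : pred I) (F : I -> R) :
  (forall i, Pr i -> 0 <= F i) -> 0 <= \big[Rplus/0]_(i | Pr i) F i.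
Proof.
move=> H; elim/big_ind: _ => //; first exact: Rle_refl.
by move=> *; lra.
Qed.

Lemma sum_distr (Pr : pred I) (F : I -> R) c :
  \big[Rplus/0]_(i | Pr i) (c * F i) = c * \big[Rplus/0]_(i | Pr i) F i.
Proof.
elim/big_rec2: _ => [|i y1 y2 _ ->]; ring.
Qed.

Lemma term_le_sum (Pr : pred I) (F : I -> R) j :
  (forall i, Pr i -> 0 <= F i) -> Pr j -> F j <= \big[Rplus/0]_(i | Pr i) F i.
Proof.
move=> H Pj; rewrite (bigD1 j) //=.
have : 0 <= \big[Rplus/0]_(i | Pr i && (i != j)) F i.
  by apply: sum_ge0 => i /andP[] /H.
lra.
Qed.

Lemma sum_eq0 (Pr : pred I) (F : I -> R) j :
  (forall i, Pr i -> 0 <= F i) -> \big[Rplus/0]_(i | Pr i) F i = 0 -> Pr j -> F j = 0.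
Proof.
move=> H S Pj; have := term_le_sum H Pj; have := H j Pj; lra.
Qed.

Lemma sum_le_filter (Pr Qr : pred I) (F : I -> R) :
  (forall i, Pr i -> 0 <= F i) -> (forall i, Qr i -> Pr i) ->
  \big[Rplus/0]_(i | Qr i) F i <= \big[Rplus/0]_(i | Pr i) F i.
Proof.
move=> H HQ; rewrite [X in X <= _]big_mkcond [X in _ <= X]big_mkcond /=.
apply: sum_le => i _.
case Qi: (Qr i); first by rewrite HQ //; apply: Rle_refl.
case Pi: (Pr i); [exact: H | exact: Rle_refl].
Qed.
End Aux.

Theorem proposition4 (X : finType) (e : rel X)
  (e_sym : symmetric e) (e_irr : irreflexive e)
  (P : X -> R) (hP : is_pmf P) :
  forall Q : X -> {set X} -> R, in_Delta e P Q ->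
    (I2 e P <= H2_obj e P Q)%R.
Proof.
move=> Q [Q0 [Qmi [QP Q1]]].
have [P0 P1] := hP.
have Qout : forall x (y : {set X}), ~~ (x \in y) -> Q x y = 0.
  move=> x y xy; case miy: (max_indep e y); last by apply: Qmi; rewrite miy.
  have S : \big[Rplus/0]_(x : X) \big[Rplus/0]_(y : {set X} | max_indep e y && ~~ (x \in y)) Q x y = 0.
    have E : forall x, \big[Rplus/0]_(y : {set X} | max_indep e y) Q x y =
      \big[Rplus/0]_(y : {set X} | max_indep e y && (x \in y)) Q x y +
      \big[Rplus/0]_(y : {set X} | max_indep e y && ~~ (x \in y)) Q x y.
      by move=> z; rewrite (bigID (fun y : {set X} => z \in y)).
    have : \big[Rplus/0]_(x : X) \big[Rplus/0]_(y : {set X} | max_indep e y) Q x y = 1.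
      by rewrite -P1; apply: eq_bigr => z _; rewrite QP.
    under eq_bigr => z _ do rewrite E.
    rewrite big_split /=. rewrite Q1. lra.
  have S2 : \big[Rplus/0]_(y : {set X} | max_indep e y && ~~ (x \in y)) Q x y = 0.
    apply: (sum_eq0 (j := x) _ S) => // z _; apply: sum_ge0 => w _; exact: Q0.
  apply: (sum_eq0 (j := y) _ S2); [move=> *; exact: Q0 | by rewrite miy].
have indep : forall (y : {set X}) x x', max_indep e y -> x \in y -> x' \in y -> ~~ e x x'.
  move=> y x x' /maxsetp /forall_inP /(_ x) H xy x'y.
  by move: (H xy) => /forall_inP /(_ x' x'y).
set A := \big[Rplus/0]_(x : X) \big[Rplus/0]_(x' : X | ~~ e x x') (P x * P x').
set B := \big[Rplus/0]_(x : X) \big[Rplus/0]_(y : {set X} | max_indep e y && (x \in y))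
            (P x * margY Q y).
have BA : B <= A.
  rewrite /B /A; apply: sum_le => x _.
  apply: (Rle_trans _ (\big[Rplus/0]_(y : {set X} | max_indep e y && (x \in y))
       \big[Rplus/0]_(x' : X | ~~ e x x') (P x * Q x' y))).
    apply: Req_le; apply: eq_bigr => y /andP[miy xy].
    rewrite /margY -sum_distr [RHS]big_mkcond /=; apply: eq_bigr => x' _.
    case ex: (e x x') => //=.
    rewrite Qout ?Rmult_0_r //; apply/negP => x'y.
    by have := indep _ _ _ miy xy x'y; rewrite ex.
  apply: (Rle_trans _ (\big[Rplus/0]_(y : {set X} | max_indep e y)
       \big[Rplus/0]_(x' : X | ~~ e x x') (P x * Q x' y))).
    apply: sum_le_filter; last by move=> y /andP[].
    move=> y _; apply: sum_ge0 => x' _; apply: Rmult_le_pos; [exact: P0 | exact: Q0].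
  rewrite exchange_big /=; apply: Req_le; apply: eq_bigr => x' _.
  by rewrite sum_distr QP.
have B0 : 0 < B.
  have Bge : 0 <= B.
    apply: sum_ge0 => x _; apply: sum_ge0 => y _; apply: Rmult_le_pos => //.
    by apply: sum_ge0 => *; apply: Q0.
  case: (Rle_lt_or_eq_dec _ _ Bge) => // Beq.
  exfalso.
  have : \big[Rplus/0]_(x : X) \big[Rplus/0]_(y : {set X} | max_indep e y && (x \in y)) Q x y = 0.
    apply: big1 => x _; apply: big1 => y /andP[miy xy].
    have Ti : forall x (y : {set X}), max_indep e y && (x \in y) -> 0 <= P x * margY Q y.
      move=> z w _; apply: Rmult_le_pos => //; by apply: sum_ge0 => *; apply: Q0.
    have T := sum_eq0 (j := x) (fun z _ => sum_ge0 (Ti z)) (esym Beq) isT.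
    have T2 := sum_eq0 (Ti x) T (j := y); rewrite miy xy in T2.
    have h1 : Q x y <= P x.
      by rewrite -QP; apply: (term_le_sum (Pr := max_indep e)) => // *; apply: Q0.
    have h2 : Q x y <= margY Q y.
      by apply: (term_le_sum (Pr := predT) (F := fun z => Q z y)) => // *; apply: Q0.
    have h0 := Q0 x y.
    have h3 := T2 isT.
    have : Q x y * Q x y <= P x * margY Q y.
      by apply: Rmult_le_compat.
    nra.
  rewrite Q1; lra.
rewrite /I2 /H2_obj /log2 -/A -/B.
have l2 : 0 < / ln 2.
  apply: Rinv_0_lt_compat; rewrite -ln_1; apply: ln_increasing; lra.
have hl : ln B <= ln A.
  case: (Rle_lt_or_eq_dec _ _ BA) => h.
    by apply: Rlt_le; apply: ln_increasing.
  by rewrite h; apply: Rle_refl.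
rewrite /Rdiv; nra.
Qed.
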